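(* Let $\mathbf{A}\in V(\mathsf{BCA})$. Then: (1) $\mathbf{A}\models J_2x\approx x$ if and only if the $\{\wedge,\vee,\neg,0,1\}$-reduct of $\mathbf{A}$ is a Boolean algebra; (2) $\mathbf{A}\models J_2x\approx 1$ if and only if the $\{\wedge,\vee,\neg,0,1\}$-reduct of $\mathbf{A}$ is a semilattice (with zero). Here a semilattice means an involutive bisemilattice satisfying $x\vee y\approx x\wedge y$, equivalently $\neg x\approx x$, equivalently $0\approx 1$.
   Context: $\mathbf{WK}^e$ is the three-element algebra on $\{0,\tfrac12,1\}$ of type $\langle\wedge,\vee,\neg,J_2,0,1\rangle$. Its operations are: - $\neg$ swaps $0,1$ and fixes $\tfrac12$; - $\wedge,\vee$ are Boolean on $\{0,1\}$ and return $\tfrac12$ if some argument is $\tfrac12$; - $J_2(1)=1$ and $J_2(\tfrac12)=J_2(0)=0$. $\mathsf{BCA}=ISP(\mathbf{WK}^e)$ and $V(\mathsf{BCA})=HSP(\mathbf{WK}^e)$. An involutive bisemilattice is an algebra $\langle A,\wedge,\vee,\neg,0,1\rangle$ satisfying: - $x\vee x\approx x$; - $x\vee y\approx y\vee x$; - $x\vee(y\vee z)\approx(x\vee y)\vee z$; - $\neg\neg x\approx x$; - $x\wedge y\approx\neg(\neg x\vee\neg y)$; - $x\wedge(\neg x\vee y)\approx x\wedge y$; - $0\vee x\approx x$; - $1\approx\neg 0$. The $\{\wedge,\vee,\neg,0,1\}$-reduct of every member of $V(\mathsf{BCA})$ is an involutive bisemilattice. *)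

(* Defs.v *)
Record alg : Type := Alg {
  car  :> Type;
  meet : car -> car -> car;
  join : car -> car -> car;
  neg  : car -> car;
  j2   : car -> car;
  zero : car;
  one  : car
}.

Inductive wk3 : Type := W0 | Whalf | W1.

Definition wk_neg (x : wk3) : wk3 :=
  match x with W0 => W1 | Whalf => Whalf | W1 => W0 end.

Definition wk_meet (x y : wk3) : wk3 :=
  match x, y with
  | Whalf, _ | _, Whalf => Whalf
  | W1, W1 => W1
  | _, _ => W0
  end.

Definition wk_join (x y : wk3) : wk3 :=
  match x, y with
  | Whalf, _ | _, Whalf => Whalf
  | W0, W0 => W0
  | _, _ => W1
  end.

Definition wk_j2 (x : wk3) : wk3 :=
  match x with W1 => W1 | _ => W0 end.

Definition WKe : alg := Alg wk3 wk_meet wk_join wk_neg wk_j2 W0 W1.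

Definition subpower_closed (I : Type) (S : (I -> wk3) -> Prop) : Prop :=
  (forall f g, S f -> S g -> S (fun i => wk_meet (f i) (g i))) /\
  (forall f g, S f -> S g -> S (fun i => wk_join (f i) (g i))) /\
  (forall f, S f -> S (fun i => wk_neg (f i))) /\
  (forall f, S f -> S (fun i => wk_j2 (f i))) /\
  S (fun _ => W0) /\
  S (fun _ => W1).

(* A is in HSP(WK^e) = V(BCA): A is a homomorphic image of a subalgebra S of
   a direct power WK^e^I, via a surjective homomorphism h : S -> A. *)
Definition in_V_BCA (A : alg) : Prop :=
  exists (I : Type) (S : (I -> wk3) -> Prop) (h : {f | S f} -> A),
    @subpower_closed I S /\
    (forall a : A, exists x, h x = a) /\
    (forall x y : {f | S f}, forall Hm,
        h (exist _ (fun i => wk_meet (proj1_sig x i) (proj1_sig y i)) Hm)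
        = meet A (h x) (h y)) /\
    (forall x y : {f | S f}, forall Hj,
        h (exist _ (fun i => wk_join (proj1_sig x i) (proj1_sig y i)) Hj)
        = join A (h x) (h y)) /\
    (forall x : {f | S f}, forall Hn,
        h (exist _ (fun i => wk_neg (proj1_sig x i)) Hn) = neg A (h x)) /\
    (forall x : {f | S f}, forall Hn,
        h (exist _ (fun i => wk_j2 (proj1_sig x i)) Hn) = j2 A (h x)) /\
    (forall H0, h (exist _ (fun _ => W0) H0) = zero A) /\
    (forall H1, h (exist _ (fun _ => W1) H1) = one A).

Definition reduct_is_boolean (A : alg) : Prop :=
  (forall x y z : A, join A x (join A y z) = join A (join A x y) z) /\
  (forall x y z : A, meet A x (meet A y z) = meet A (meet A x y) z) /\
  (forall x y : A, join A x y = join A y x) /\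
  (forall x y : A, meet A x y = meet A y x) /\
  (forall x y : A, join A x (meet A x y) = x) /\
  (forall x y : A, meet A x (join A x y) = x) /\
  (forall x y z : A, meet A x (join A y z) = join A (meet A x y) (meet A x z)) /\
  (forall x : A, join A x (zero A) = x) /\
  (forall x : A, meet A x (one A) = x) /\
  (forall x : A, join A x (neg A x) = one A) /\
  (forall x : A, meet A x (neg A x) = zero A).

Definition reduct_is_IBSL (A : alg) : Prop :=
  (forall x : A, join A x x = x) /\
  (forall x y : A, join A x y = join A y x) /\
  (forall x y z : A, join A x (join A y z) = join A (join A x y) z) /\
  (forall x : A, neg A (neg A x) = x) /\
  (forall x y : A, meet A x y = neg A (join A (neg A x) (neg A y))) /\
  (forall x y : A, meet A x (join A (neg A x) y) = meet A x y) /\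
  (forall x : A, join A (zero A) x = x) /\
  one A = neg A (zero A).

Definition reduct_is_semilattice (A : alg) : Prop :=
  reduct_is_IBSL A /\ (forall x y : A, join A x y = meet A x y).

(* Main.v *)
Require Import Defs.
From Stdlib Require Import FunctionalExtensionality ProofIrrelevance.

Ltac close_wk heq :=
  apply heq; simpl; apply functional_extensionality; intro;
  repeat match goal with |- context [proj1_sig ?x ?i] => destruct (proj1_sig x i) end;
  reflexivity.

Ltac push hm hj hn hj2 h0 h1 := repeat first [rewrite <- hm | rewrite <- hj | rewrite <- hn | rewrite <- hj2 | rewrite <- h0 | rewrite <- h1].
Ltac vars Hsurj := intros; repeat match goal with a : car _ |- _ => let x := fresh "x" in destruct (Hsurj a) as [x <-] end.

Theorem lemma4p9 (A : alg) (HA : in_V_BCA A) :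
  ((forall x : A, j2 A x = x) <-> reduct_is_boolean A) /\
  ((forall x : A, j2 A x = one A) <-> reduct_is_semilattice A).
Proof.
  destruct HA as (I & S & h & [Cm [Cj [Cn [Cj2 [C0 C1]]]]] & Hsurj & hm & hj & hn & hj2 & h0 & h1).
  assert (hm' : forall x y : {f | S f}, h (exist S (fun i => wk_meet (proj1_sig x i) (proj1_sig y i)) (Cm _ _ (proj2_sig x) (proj2_sig y))) = meet A (h x) (h y)) by (intros; apply hm).
  assert (hj' : forall x y : {f | S f}, h (exist S (fun i => wk_join (proj1_sig x i) (proj1_sig y i)) (Cj _ _ (proj2_sig x) (proj2_sig y))) = join A (h x) (h y)) by (intros; apply hj).
  assert (hn' : forall x : {f | S f}, h (exist S (fun i => wk_neg (proj1_sig x i)) (Cn _ (proj2_sig x))) = neg A (h x)) by (intros; apply hn).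
  assert (hj2' : forall x : {f | S f}, h (exist S (fun i => wk_j2 (proj1_sig x i)) (Cj2 _ (proj2_sig x))) = j2 A (h x)) by (intros; apply hj2).
  assert (h0' : h (exist S (fun _ => W0) C0) = zero A) by apply h0.
  assert (h1' : h (exist S (fun _ => W1) C1) = one A) by apply h1.
  assert (heq : forall u v : {f | S f}, proj1_sig u = proj1_sig v -> h u = h v).
  { intros [u pu] [v pv]; simpl; intros ->. rewrite (proof_irrelevance _ pu pv); reflexivity. }
  split; split.
  - intro HJ.
    unfold reduct_is_boolean.
    repeat split; vars Hsurj;
    repeat match goal with x : {f | S f} |- _ => rewrite <- (HJ (h x)); revert x end; intros; (push hm' hj' hn' hj2' h0' h1'; close_wk heq).
  - intros B.
    destruct B as (_&_&_&_&_&_&_&_&Bm1&Bc&_).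
    intro a; destruct (Hsurj a) as [x <-].
    assert (E: meet A (j2 A (h x)) (join A (h x) (neg A (h x))) = h x) by (push hm' hj' hn' hj2' h0' h1'; close_wk heq).
    rewrite Bc, Bm1 in E. exact E.
  - intro HJ.
    assert (Z : zero A = one A).
    { rewrite <- (HJ (zero A)). (push hm' hj' hn' hj2' h0' h1'; close_wk heq). }
    assert (N : forall c : A, neg A c = c).
    { intro a; destruct (Hsurj a) as [x <-]. assert (E1 : join A (h x) (zero A) = h x) by (push hm' hj' hn' hj2' h0' h1'; close_wk heq).
      assert (E2 : join A (neg A (h x)) (zero A) = neg A (h x)) by (push hm' hj' hn' hj2' h0' h1'; close_wk heq).
      assert (E3 : join A (h x) (one A) = join A (neg A (h x)) (one A)) by (push hm' hj' hn' hj2' h0' h1'; close_wk heq).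
      rewrite Z in E1, E2. congruence. }
    split.
    + unfold reduct_is_IBSL. repeat split; vars Hsurj; (push hm' hj' hn' hj2' h0' h1'; close_wk heq).
    + intros a b; destruct (Hsurj a) as [x <-]; destruct (Hsurj b) as [x0 <-]. assert (E : meet A (h x) (h x0) = neg A (join A (neg A (h x)) (neg A (h x0)))) by (push hm' hj' hn' hj2' h0' h1'; close_wk heq).
      rewrite E, !N. reflexivity.
  - intros [_ SL].
    assert (Z : zero A = one A).
    { assert (E1 : join A (zero A) (one A) = one A) by (push hm' hj' hn' hj2' h0' h1'; close_wk heq).
      assert (E2 : meet A (zero A) (one A) = zero A) by (push hm' hj' hn' hj2' h0' h1'; close_wk heq).
      rewrite SL in E1. congruence. }
    intro a; destruct (Hsurj a) as [x <-].
    assert (E1 : join A (j2 A (h x)) (zero A) = j2 A (h x)) by (push hm' hj' hn' hj2' h0' h1'; close_wk heq).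
    assert (E2 : join A (j2 A (h x)) (one A) = one A) by (push hm' hj' hn' hj2' h0' h1'; close_wk heq).
    rewrite Z in E1. congruence.
Qed.
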